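(* Run the cluster decoder (exponential-growth version) on a layer code with an input Pauli-$X$ error $P$ supported on a set $B$ of qubits, and let $C_t$ denote the correction accumulated up to time $t$. Then $P\cdot C_t$ is supported within $\mathrm{Ball}(B,4^t+1)$.
   Context: Layer code: the Williamson–Baspin 3D code built from surface-code layers coupled along line defects. Decoding hypergraph $G$: one vertex per $Z$-check, one hyperedge per qubit containing the $Z$-checks acting on it. The graph metric $d_G$ on qubits is the distance in the dual hypergraph (two qubits adjacent when they share a $Z$-check); $\mathrm{Ball}(x,r)$ is the set of qubits at $d_G$-distance at most $r$ from $x$, and $\mathrm{Ball}(S,r)=\bigcup_{x\in S}\mathrm{Ball}(x,r)$. Cluster decoder: start with one single-vertex active cluster per excited vertex (violated $Z$-check); at steps $t=0,1,\dots$ grow each active cluster to graph radius $4^t$, merge overlapping active clusters, and for each active cluster $T$ that is correctable (some set of hyperedges contained in $T$ meets each excited vertex of $T$ an odd number of times and every other vertex of $T$ an even number of times) apply such a set of qubit flips and deactivate $T$; stop when no active clusters remain. *)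

(* Defs.v *)
(* Decoding hypergraph: V = Z-checks (vertices), Q = qubits
   (hyperedges); inc v q  <=>  Z-check v acts on qubit q. *)
From mathcomp Require Import all_boot.
Set Implicit Arguments. Unset Strict Implicit. Unset Printing Implicit Defensive.

Section Defs.
Variables (V Q : finType) (inc : V -> Q -> bool).

(* symmetric difference = support of the product of two Pauli-X operators *)
Definition symd (T : finType) (A B : {set T}) : {set T} := (A :\: B) :|: (B :\: A).

Definition syndrome (E : {set Q}) : {set V} :=
  [set v | odd #|[set q in E | inc v q]|].

Definition qadj (q q' : Q) : bool := [exists v, inc v q && inc v q'].

Definition qball (S : {set Q}) (r : nat) : {set Q} :=
  iter r (fun A => A :|: [set q | [exists q' in A, qadj q' q]]) S.

Definition vadj (u w : V) : bool := [exists q, inc u q && inc w q].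

Definition vball (S : {set V}) (r : nat) : {set V} :=
  iter r (fun A => A :|: [set w | [exists u in A, vadj u w]]) S.

Definition contained (T : {set V}) : {set Q} :=
  [set q | [forall v, inc v q ==> (v \in T)]].

Definition is_correction (T s : {set V}) (F : {set Q}) : bool :=
  (F \subset contained T) &&
  [forall v in T, odd #|[set q in F | inc v q]| == (v \in s)].

Definition correctable (T s : {set V}) : bool :=
  [exists F : {set Q}, is_correction T s F].

Definition overlap (r : nat) (u w : V) : bool :=
  [exists x, (x \in vball [set u] r) && (x \in vball [set w] r)].

Definition cluster_seeds (A : {set V}) (r : nat) (u : V) : {set V} :=
  [set w | connect (fun a b => [&& a \in A, b \in A & overlap r a b]) u w].

(* the merged active clusters at radius r, given by their seed sets K;
   the cluster region is vball K r *)
Definition clusters (A : {set V}) (r : nat) : {set {set V}} :=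
  [set cluster_seeds A r u | u in A].

Definition deact (A : {set V}) (r : nat) (s : {set V}) : {set {set V}} :=
  [set K in clusters A r | correctable (vball K r) (s :&: vball K r)].

(* A valid run of the exponential-growth cluster decoder on X-error P.
   A t = active seeds (excited vertices of active clusters) at the start of step t,
   D t = correction accumulated before step t (so D t.+1 = C_t, the correction
   accumulated up to and including step t). At step t active clusters are grown
   to radius 4^t, merged, and each correctable one is corrected by an arbitrary
   valid correction F K and deactivated. *)
Definition valid_run (P : {set Q}) (A : nat -> {set V}) (D : nat -> {set Q}) : Prop :=
  A 0 = syndrome P /\ D 0 = set0 /\
  forall t, exists F : {set V} -> {set Q},
    let s := syndrome (symd P (D t)) in
    let Dk := deact (A t) (4 ^ t) s in
    (forall K, K \in Dk -> is_correction (vball K (4 ^ t)) (s :&: vball K (4 ^ t)) (F K)) /\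
    A t.+1 = A t :\: \bigcup_(K in Dk) K /\
    D t.+1 = symd (D t) [set q | odd #|[set K in Dk | q \in F K]|].

End Defs.

(* Main.v *)
Require Import Defs.
From mathcomp Require Import all_boot.

Section L.
Set Implicit Arguments.
Variables (V Q : finType) (inc : V -> Q -> bool).

Lemma qballS (S : {set Q}) k :
  qball inc S k.+1 = qball inc S k :|: [set q | [exists q' in qball inc S k, qadj inc q' q]].
Proof. by []. Qed.

Lemma vballS (S : {set V}) k :
  vball inc S k.+1 = vball inc S k :|: [set w | [exists u in vball inc S k, vadj inc u w]].
Proof. by []. Qed.

Lemma qball_succ (S : {set Q}) k : qball inc S k \subset qball inc S k.+1.
Proof. by rewrite qballS subsetUl. Qed.

Lemma qball_mono (S : {set Q}) k k' : k <= k' -> qball inc S k \subset qball inc S k'.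
Proof.
move/subnK <-; elim: (k' - k) => [|n IH]; first by rewrite add0n.
exact: subset_trans IH (qball_succ _ _).
Qed.

Lemma qball_base (S : {set Q}) k : S \subset qball inc S k.
Proof. exact: qball_mono (leq0n k). Qed.

Lemma qball_monoS (S S' : {set Q}) k : S \subset S' -> qball inc S k \subset qball inc S' k.
Proof.
move=> H; elim: k => [|k IH] //.
rewrite !qballS; apply/subsetP => q; rewrite !inE.
case/orP => [h|/existsP [q' /andP [h1 h2]]].
  by rewrite (subsetP IH _ h).
apply/orP; right; apply/existsP; exists q'; by rewrite (subsetP IH _ h1) h2.
Qed.

Lemma vball_qball (S : {set V}) (X : {set Q}) :
  (forall u, u \in S -> exists2 p, p \in X & inc u p) ->
  forall k v q, v \in vball inc S k -> inc v q -> q \in qball inc X k.+1.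
Proof.
move=> HS; elim => [|k IH] v q.
  move=> Hv Hq; have [p Hp Hup] := HS v Hv.
  rewrite qballS !inE; apply/orP; right; apply/existsP; exists p.
  rewrite Hp /=; apply/existsP; exists v; by rewrite Hup Hq.
rewrite vballS inE => /orP [Hv|]; first by move=> Hq; exact: (subsetP (qball_succ _ _)) (IH v q Hv Hq).
rewrite inE => /existsP [u /andP [Hu /existsP [q0 /andP [h1 h2]]]] Hq.
have Hq0 := IH u q0 Hu h1.
rewrite qballS !inE; apply/orP; right; apply/existsP; exists q0.
rewrite Hq0 /=; apply/existsP; exists v; by rewrite h2 Hq.
Qed.

Lemma seeds_sub (A : {set V}) r u w : u \in A -> w \in cluster_seeds inc A r u -> w \in A.
Proof.
move=> Hu; rewrite inE => /connectP [p Hp ->].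
elim: p u Hu Hp => [|x p IH] u Hu //= /andP [/and3P [_ hx _] hp].
exact: IH hx hp.
Qed.

End L.

Lemma in_symd (T : finType) (X Y : {set T}) x :
  (x \in symd X Y) = ((x \in X) && (x \notin Y)) || ((x \in Y) && (x \notin X)).
Proof. by rewrite /symd in_setU !in_setD andbC [(x \in Y) && _]andbC. Qed.

Lemma odd_gt0 {n} : odd n -> 0 < n.
Proof. by case: n. Qed.

Theorem lemma8 (V Q : finType) (inc : V -> Q -> bool)
  (hcov : forall q : Q, exists v : V, inc v q)
  (B P : {set Q}) (A : nat -> {set V}) (D : nat -> {set Q}) (t : nat) :
  P \subset B -> valid_run inc P A D ->
  symd P (D t.+1) \subset qball inc B (4 ^ t + 1).
Proof.
move=> HPB [HA0 [HD0 Hrun]].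
have HAs : forall s, A s \subset syndrome inc P.
  elim => [|s IH]; first by rewrite HA0.
  case: (Hrun s) => F /= [_ [-> _]].
  exact: subset_trans (subsetDl _ _) IH.
have HX : forall u, u \in syndrome inc P -> exists2 p, p \in P & inc u p.
  move=> u; rewrite inE => Hodd.
  have : [set q in P | inc u q] != set0.
    by apply/negP => /eqP E; rewrite E cards0 in Hodd.
  case/set0Pn => p; rewrite inE => /andP [h1 h2]; by exists p.
have HD : forall s, s <= t.+1 -> D s \subset qball inc B (4 ^ t + 1).
  elim => [|s IH] Hs; first by rewrite HD0 sub0set.
  case: (Hrun s) => F /= [HF [_ ->]].
  apply/subsetP => q; rewrite in_symd => /orP [/andP [hq _]|/andP [hq _]].
    exact: (subsetP (IH (ltnW Hs))).
  move: hq; rewrite inE => hq.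
  have /card_gt0P [K] := odd_gt0 hq.
  rewrite inE => /andP [HK HqK].
  have HFK := HF K HK.
  move: HK; rewrite inE => /andP [HK _].
  move: HFK => /andP [/subsetP Hsub _].
  move: (Hsub q HqK); rewrite inE => /forallP Hc.
  have [v Hv] := hcov q.
  have Hvb := implyP (Hc v) Hv.
  have HKs : forall u, u \in K -> exists2 p, p \in P & inc u p.
    move=> u Hu; apply: HX; apply: (subsetP (HAs s)).
    move: HK => /imsetP [u0 Hu0 EK]; rewrite EK in Hu.
    exact: seeds_sub Hu0 Hu.
  have := @vball_qball V Q inc K P HKs _ _ _ Hvb Hv.
  move=> Hq1; apply: (subsetP (@qball_monoS V Q inc P B _ HPB)).
  apply: (subsetP (@qball_mono V Q inc P _ _ _)) Hq1.
  rewrite addn1 ltnS leq_exp2l //.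
have HDt := HD t.+1 (leqnn _).
apply/subsetP => q; rewrite in_symd => /orP [/andP [hq _]|/andP [hq _]].
  exact: (subsetP (@qball_base V Q inc B _)) (subsetP HPB _ hq).
exact: (subsetP HDt).
Qed.
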